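(* For every pair of positive integers $l$ and $r$, there exists a graph $G$ of order $lr$ that admits a regular distance $l$-labeling of degree $r$.
   Context: All graphs are finite and simple; $d(u,v)$ denotes the usual graph distance. For integers $m\le n$, $[m,n]=\{m,m+1,\ldots,n\}$. For a graph $G$ and a positive integer $l$, a distance $l$-labeling of $G$ is a function $f:V(G)\to[0,l]$ such that (i) $f(V(G))=[0,l]$ or $f(V(G))=[1,l]$, and (ii) whenever two distinct vertices $u,v$ satisfy $f(u)=f(v)=k$, we have $d(u,v)=k$. A distance $l$-labeling is regular of degree $r$ if for every $k\in[1,l]$ there are exactly $r$ vertices labeled $k$. *)

(* Defs.v *)
From mathcomp Require Import all_boot.
Set Implicit Arguments. Unset Strict Implicit. Unset Printing Implicit Defensive.

Definition simple_graph (T : finType) (e : rel T) : Prop :=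
  symmetric e /\ irreflexive e.

(* If u and v are
   in different components, gdist e u v k holds for no k (d = infinity). *)
Definition gdist (T : finType) (e : rel T) (u v : T) (k : nat) : Prop :=
  (exists p : seq T, [/\ path e u p, last u p = v & size p = k]) /\
  (forall p : seq T, path e u p -> last u p = v -> k <= size p).

Definition distance_labeling (T : finType) (e : rel T) (l : nat) (f : T -> nat)
  : Prop :=
  [/\ (forall x, f x <= l),
      (forall k, (exists x, f x = k) <-> k <= l) \/
      (forall k, (exists x, f x = k) <-> 1 <= k <= l)
    & forall u v k, u != v -> f u = k -> f v = k -> gdist e u v k].

Definition regular_distance_labeling (T : finType) (e : rel T) (l r : nat)
  (f : T -> nat) : Prop :=
  distance_labeling e l f /\
  (forall k, 1 <= k <= l -> #|[set x | f x == k]| = r).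

(* Main.v *)
Require Import Defs.
From mathcomp Require Import all_boot.
From mathcomp Require Import zify.
Set Implicit Arguments. Unset Strict Implicit. Unset Printing Implicit Defensive.

Definition edgeN (a s b t : nat) : bool :=
  [|| (s == t+2) && (a==b), (t == s+2)&&(a==b), [&& s==0, t==0 & a!=b],
      [&& s==0, a==0 & t==1] | [&& t==0, b==0 & s==1]].

Definition E (n m : nat) : rel ('I_n * 'I_m) :=
  fun x y => edgeN x.1 x.2 y.1 y.2.

Definition W (T : finType) (e : rel T) (u v : T) (n : nat) : Prop :=
  exists p : seq T, [/\ path e u p, last u p = v & size p = n].

Lemma W_refl (T : finType) (e : rel T) u : W e u u 0.
Proof. by exists [::]. Qed.

Lemma W_cons (T : finType) (e : rel T) u z v n : e u z -> W e z v n -> W e u v n.+1.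
Proof. move=> h [p [hp hl hs]]; exists (z :: p); split => //=; [by rewrite h | by rewrite hs]. Qed.

Lemma W_trans (T : finType) (e : rel T) u z v n m : W e u z n -> W e z v m -> W e u v (n + m).
Proof.
move=> [p [hp hl hs]]; elim: p u n hp hl hs => [|y p IH] u n /= hp hl hs.
  by subst; rewrite add0n.
case/andP: hp => h1 h2 W2; subst n.
rewrite addSn; apply: (W_cons h1); exact: IH.
Qed.

Lemma W_sym (T : finType) (e : rel T) u v n : symmetric e -> W e u v n -> W e v u n.
Proof.
move=> se [p [hp hl hs]]; subst n v; elim: p u hp => [|y p IH] u /= hp.
  exact: W_refl.
case/andP: hp => h1 h2.
have := W_trans (IH _ h2) (W_cons (n:=0) (v:=u) (_ : e y u) (W_refl e u)).
rewrite addn1; apply; by rewrite se.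
Qed.

Lemma lower (T : finType) (e : rel T) (g : T -> nat) c :
  (forall x y, e x y -> g y <= g x + c) ->
  forall p u, path e u p -> g (last u p) <= g u + c * size p.
Proof.
move=> hg; elim=> [|y p IH] u /=; first by rewrite muln0 addn0.
case/andP=> h1 h2; have := IH _ h2; have := hg _ _ h1. lia.
Qed.

Definition g1 (i K a s : nat) : nat :=
  if s %% 2 == 1 then (if a == i then K - (s+1) %/ 2 else K + (s+1) %/ 2)
  else (if a == 0 then K + s %/ 2 else K + s %/ 2 + 1).

Definition g2 (i K a s : nat) : nat :=
  if s %% 2 == 0 then (if a == i then K-(s+1) else K+(s+1))
  else (if i == 0 then K-(s+2) else K+(s+2)).

Lemma g1L i K a s b t : 2*s+10 <= K -> 2*t+10<=K -> edgeN a s b t ->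
  g1 i K b t <= g1 i K a s + 1.
Proof. rewrite /g1 /edgeN => h1 h2 H. repeat case: ifP; lia. Qed.

Lemma g2L i K a s b t : 2*s+10 <= K -> 2*t+10<=K -> edgeN a s b t ->
  g2 i K b t <= g2 i K a s + 2.
Proof. rewrite /g2 /edgeN => h1 h2 H. repeat case: ifP; lia. Qed.

Lemma E_sym n m : symmetric (@E n m).
Proof. move=> x y; rewrite /E /edgeN; apply/idP/idP => H; lia. Qed.

Lemma up (n m : nat) d : forall (x y : 'I_n * 'I_m.+1),
  nat_of_ord x.1 = nat_of_ord y.1 -> nat_of_ord y.2 = nat_of_ord x.2 + 2*d -> W (@E n m.+1) x y d.
Proof.
elim: d => [|d IH] x y h1 h2.
  have -> : x = y.
    case: x y h1 h2 => [a s] [b t] /= h1 h2.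
    by rewrite muln0 addn0 in h2; congr pair; apply: val_inj.
  exact: W_refl.
have hz : x.2 + 2 <= m by have := ltn_ord y.2; lia.
apply: (W_cons (z := (x.1, inord (x.2 + 2)))).
  by rewrite /E /edgeN /= inordK ?eqxx ?orbT //; lia.
apply: IH => //=; rewrite inordK; lia.
Qed.

Theorem mainTheorem5 (l r : nat) (hl : 0 < l) (hr : 0 < r) :
  exists (T : finType) (e : rel T),
    [/\ simple_graph e, #|T| = l * r &
        exists f : T -> nat, regular_distance_labeling e l r f].
Proof.
case: r hr => [//|r] _; case: l hl => [//|l] _.
exists (prod 'I_r.+1 'I_l.+1)%type, (@E r.+1 l.+1).
split.
- split; first exact: E_sym.
  by move=> x; rewrite /E /edgeN; lia.
- by rewrite card_prod !card_ord mulnC.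
exists (fun x => nat_of_ord x.2 + 1); split; last first.
  move=> k hk.
  have -> : [set x : 'I_r.+1 * 'I_l.+1 | nat_of_ord x.2 + 1 == k]
          = setX [set: 'I_r.+1] [set (inord (k-1) : 'I_l.+1)].
    apply/setP => -[a b]; rewrite !inE /=.
    rewrite -val_eqE /= inordK; lia.
  by rewrite cardsX cardsT cards1 card_ord muln1.
split.
- move=> x /=; have := ltn_ord x.2; by rewrite addn1.
- right=> k; split; first by move=> [x <-]; rewrite addn1 ltnS -ltnS ltn_ord.
  move=> hk; exists (ord0, inord (k-1)) => /=; rewrite inordK; lia.
move=> [i t] [j t'] k /= hne <- ht; have {ht} ht : t' = t by apply: ord_inj; lia.
subst t'.
have hij : nat_of_ord i != nat_of_ord j.
  apply/negP => /eqP hij; move: hne; have -> : i = j by apply: ord_inj.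
  by rewrite eqxx.
have tl := ltn_ord t.
have [m hm] : exists m, nat_of_ord t = 2*m \/ nat_of_ord t = 2*m+1.
  exists (nat_of_ord t %/ 2); lia.
case: hm => hm.
-
  split.
    have A : W (@E r.+1 l.+1) (i, t) (i, ord0) m.
      apply: W_sym; first exact: E_sym.
      apply: up => //=; lia.
    have B : W (@E r.+1 l.+1) (i, ord0) (j, ord0) 1.
      apply: W_cons; last exact: W_refl.
      by rewrite /E /edgeN /= hij; lia.
    have C : W (@E r.+1 l.+1) (j, ord0) (j, t) m by apply: up => //=; lia.
    have -> : nat_of_ord t + 1 = m + 1 + m by lia.
    exact: W_trans (W_trans A B) C.
  move=> p hp hl.
  have G : forall x y : 'I_r.+1 * 'I_l.+1, E x y ->
      g2 (nat_of_ord i) (2*l+12) y.1 y.2 <= g2 (nat_of_ord i) (2*l+12) x.1 x.2 + 2.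
    move=> [a s] [b s'] h; apply: g2L => //=;
      [have := ltn_ord s | have := ltn_ord s']; lia.
  have := lower G hp; rewrite hl /= /g2.
  move: hij hm tl; repeat case: ifP; lia.
- have h1 : 1 <= l by lia.
  have o1 : nat_of_ord (inord 1 : 'I_l.+1) = 1 by rewrite inordK.
  split.
    have A : W (@E r.+1 l.+1) (i, t) (i, inord 1) m.
      apply: W_sym; first exact: E_sym.
      apply: up => //=; lia.
    have B : W (@E r.+1 l.+1) (i, inord 1) (ord0, ord0) 1.
      apply: W_cons; last exact: W_refl.
      by rewrite /E /edgeN /= o1; lia.
    have B' : W (@E r.+1 l.+1) (ord0, ord0) (j, inord 1) 1.
      apply: W_cons; last exact: W_refl.
      by rewrite /E /edgeN /= o1; lia.
    have C : W (@E r.+1 l.+1) (j, inord 1) (j, t) m by apply: up => //=; lia.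
    have -> : nat_of_ord t + 1 = m + 1 + 1 + m by lia.
    exact: W_trans (W_trans (W_trans A B) B') C.
  move=> p hp hl.
  have G : forall x y : 'I_r.+1 * 'I_l.+1, E x y ->
      g1 (nat_of_ord i) (2*l+12) y.1 y.2 <= g1 (nat_of_ord i) (2*l+12) x.1 x.2 + 1.
    move=> [a s] [b s'] h; apply: g1L => //=;
      [have := ltn_ord s | have := ltn_ord s']; lia.
  have := lower G hp; rewrite hl /= /g1.
  move: hij hm tl; repeat case: ifP; lia.
Qed.
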